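(* Let $(X,\rho)$ be a metric space, $(A_k)\subset CL(X)$, $A\in CL(X)$ and let $f\colon[0,\infty)\to[0,\infty)$ be a modulus. If $(A_k)$ is Wijsman strongly Cesàro summable to $A$, then $(A_k)$ is Wijsman strongly Cesàro summable to $A$ with respect to $f$.
   Context: A modulus is a function $f\colon[0,\infty)\to[0,\infty)$ such that $f(x)=0$ iff $x=0$, $f$ is subadditive, increasing and continuous. $CL(X)$ denotes the set of all non-empty closed subsets of $(X,\rho)$, and $d(x,B)=\inf_{y\in B}\rho(x,y)$. $(A_k)$ is Wijsman strongly Cesàro summable to $A$ if $\lim_{n\to\infty}\frac1n\sum_{k=1}^n|d(x,A_k)-d(x,A)|=0$ for every $x\in X$; it is Wijsman strongly Cesàro summable to $A$ with respect to $f$ if $\lim_{n\to\infty}\frac1n\sum_{k=1}^n f(|d(x,A_k)-d(x,A)|)=0$ for every $x\in X$. *)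

(* Defs.v *)
From Stdlib Require Import Reals.
From Coquelicot Require Import Coquelicot.
Open Scope R_scope.

Definition is_metric {X : Type} (rho : X -> X -> R) : Prop :=
  (forall x y, 0 <= rho x y) /\
  (forall x y, rho x y = 0 <-> x = y) /\
  (forall x y, rho x y = rho y x) /\
  (forall x y z, rho x z <= rho x y + rho y z).

Definition is_closed_set {X : Type} (rho : X -> X -> R) (B : X -> Prop) : Prop :=
  forall (u : nat -> X) (x : X),
    (forall n, B (u n)) -> Un_cv (fun n => rho (u n) x) 0 -> B x.

Definition in_CL {X : Type} (rho : X -> X -> R) (B : X -> Prop) : Prop :=
  (exists y, B y) /\ is_closed_set rho B.

(* d(x,B) = inf_{y in B} rho(x,y) (finite for nonempty B, as rho >= 0). *)
Definition dist_set {X : Type} (rho : X -> X -> R) (x : X) (B : X -> Prop) : R :=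
  real (Glb_Rbar (fun r => exists y, B y /\ r = rho x y)).

(* Modulus f : [0,oo) -> [0,oo), represented as R -> R with all
   conditions restricted to [0,oo). *)
Definition is_modulus (f : R -> R) : Prop :=
  (forall x, 0 <= x -> 0 <= f x) /\
  (forall x, 0 <= x -> (f x = 0 <-> x = 0)) /\
  (forall x y, 0 <= x -> 0 <= y -> f (x + y) <= f x + f y) /\
  (forall x y, 0 <= x -> x <= y -> f x <= f y) /\
  (forall x, 0 <= x ->
     filterlim f (within (fun y => 0 <= y) (locally x)) (locally (f x))).

(* (1/n) * sum_{k=1}^n g k, as a sequence in n (value at n = 0 is 0). *)
Definition cesaro_mean (g : nat -> R) (n : nat) : R :=
  / INR n * sum_f 1 n g.

(* Note: Stdlib's sum_f s n f = sum_{i=0}^{n-s} f (i+s), so for n >= 1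
   sum_f 1 n g = g 1 + ... + g n. *)

Definition wijsman_strong_cesaro {X : Type} (rho : X -> X -> R)
  (Ak : nat -> X -> Prop) (A : X -> Prop) : Prop :=
  forall x : X,
    Un_cv (cesaro_mean (fun k => Rabs (dist_set rho x (Ak k) - dist_set rho x A))) 0.

Definition wijsman_strong_cesaro_f {X : Type} (rho : X -> X -> R) (f : R -> R)
  (Ak : nat -> X -> Prop) (A : X -> Prop) : Prop :=
  forall x : X,
    Un_cv (cesaro_mean (fun k => f (Rabs (dist_set rho x (Ak k) - dist_set rho x A)))) 0.

(* Main.v *)
Require Import Defs.
From Stdlib Require Import Reals Lra Lia ZArith.
From Coquelicot Require Import Coquelicot.
Open Scope R_scope.

Lemma small_bound (f : R -> R) (Hf : is_modulus f) (e : R) :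
  0 < e -> exists d, 0 < d /\ f d <= e.
Proof.
  intros He. destruct Hf as [H0 [H1 [H2 [H3 H4]]]].
  assert (f0 : f 0 = 0) by (apply (H1 0); lra).
  specialize (H4 0 (Rle_refl 0)).
  apply filterlim_locally with (eps := mkposreal e He) in H4.
  destruct H4 as [[d Hd] Hb]. simpl in Hb.
  exists (d/2). split. lra.
  assert (B : ball 0 d (d/2)).
  { change (Rabs (d/2 - 0) < d). rewrite Rabs_pos_eq; lra. }
  specialize (Hb (d/2) B ltac:(lra)).
  change (Rabs (f (d/2) - f 0) < e) in Hb. rewrite f0 in Hb.
  apply Rabs_def2 in Hb. lra.
Qed.

Lemma lin_bound (f : R -> R) (Hf : is_modulus f) (d : R) :
  0 < d -> forall t, 0 <= t -> f t <= f d + f d / d * t.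
Proof.
  intros Hd. destruct Hf as [H0 [H1 [H2 [H3 H4]]]].
  assert (f0 : f 0 = 0) by (apply (H1 0); lra).
  assert (Hfd : 0 <= f d) by (apply H0; lra).
  assert (Hc : 0 <= f d / d) by (apply Rdiv_le_0_compat; lra).
  assert (I : forall n t, 0 <= t <= INR n * d -> f t <= f d + f d / d * t).
  { induction n; intros t Ht.
    - simpl in Ht. assert (t = 0) by lra. subst. rewrite f0. nra.
    - destruct (Rle_dec t d).
      + assert (f t <= f d) by (apply H3; lra). nra.
      + replace t with (d + (t - d)) by ring.
        rewrite S_INR in Ht.
        assert (f (d + (t - d)) <= f d + f (t - d)) by (apply H2; lra).
        assert (f (t - d) <= f d + f d / d * (t - d)) by (apply IHn; nra).
        assert (f d / d * d = f d) by (field; lra).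
        nra. }
  intros t Ht.
  destruct (archimed (t / d)) as [Ha _].
  assert (Hup : (0 <= up (t/d))%Z).
  { apply le_IZR. assert (0 <= t/d) by (apply Rdiv_le_0_compat; lra). lra. }
  apply (I (Z.to_nat (up (t/d)))). split; auto.
  rewrite INR_IZR_INZ, Z2Nat.id by auto.
  assert (t / d * d = t) by (field; lra). nra.
Qed.

Lemma key (f : R -> R) (Hf : is_modulus f) (a : nat -> R) :
  (forall k, 0 <= a k) -> Un_cv (cesaro_mean a) 0 ->
  Un_cv (cesaro_mean (fun k => f (a k))) 0.
Proof.
  intros Ha Hc eps Heps.
  destruct (small_bound f Hf (eps/2)) as [d [Hd Hfd]]; [lra|].
  pose proof (lin_bound f Hf d Hd) as Hl.
  set (C := f d / d).
  assert (HC : 0 <= C).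
  { apply Rdiv_le_0_compat; [apply (proj1 Hf)|]; lra. }
  destruct (Hc (eps / 2 / (C + 1))) as [N HN].
  { apply Rdiv_lt_0_compat; lra. }
  exists (S N). intros n Hn.
  specialize (HN n ltac:(lia)).
  unfold Rdist in *. rewrite Rminus_0_r in *.
  unfold cesaro_mean, sum_f in *.
  assert (Hn0 : 0 < INR n) by (apply lt_0_INR; lia).
  assert (Hi : 0 < / INR n) by (apply Rinv_0_lt_compat; lra).
  set (SA := sum_f_R0 (fun x => a (x + 1)%nat) (n - 1)) in *.
  set (SF := sum_f_R0 (fun x => f (a (x + 1)%nat)) (n - 1)).
  assert (SA0 : 0 <= SA) by (apply cond_pos_sum; intros; apply Ha).
  assert (SF0 : 0 <= SF).
  { apply cond_pos_sum; intros; apply (proj1 Hf); apply Ha. }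
  assert (SFb : SF <= eps/2 * INR n + C * SA).
  { unfold SF, SA.
    eapply Rle_trans.
    { apply sum_Rle with (Bn := fun x => eps/2 + a (x+1)%nat * C).
      intros m _. pose proof (Hl _ (Ha (m+1)%nat)). fold C in H. nra. }
    rewrite sum_plus, sum_cte, <- scal_sum.
    replace (S (n - 1)) with n by lia. lra. }
  rewrite Rabs_pos_eq in * by (apply Rmult_le_pos; lra).
  assert (/ INR n * SA * (C + 1) < eps / 2).
  { apply (Rmult_lt_compat_r (C+1)) in HN; [|lra].
    replace (eps / 2 / (C + 1) * (C + 1)) with (eps/2) in HN by (field; lra).
    exact HN. }
  assert (/ INR n * SF <= / INR n * (eps / 2 * INR n + C * SA)).
  { apply Rmult_le_compat_l; lra. }
  replace (/ INR n * (eps / 2 * INR n + C * SA)) with (eps/2 + C * (/INR n * SA))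
    in H0 by (field; lra).
  assert (0 <= / INR n * SA) by (apply Rmult_le_pos; lra).
  nra.
Qed.

Theorem theorem4p3 (X : Type) (rho : X -> X -> R) (Ak : nat -> X -> Prop)
  (A : X -> Prop) (f : R -> R)
  (Hrho : is_metric rho)
  (HAk : forall k, in_CL rho (Ak k))
  (HA : in_CL rho A)
  (Hf : is_modulus f) :
  wijsman_strong_cesaro rho Ak A -> wijsman_strong_cesaro_f rho f Ak A.
Proof.
  intros H x. apply key; auto. intros; apply Rabs_pos.
Qed.
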